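(* Let $\lambda>0$ and let $f$ be analytic in $\mathbb{D}=\{z:|z|<1\}$ with $f(0)=0$, $f'(0)=1$. If $|f''(z)|\le2\lambda$ for all $z\in\mathbb{D}$, then $f\in\Omega_\lambda$. The number $2\lambda$ is best possible.
   Context: $\Omega_\lambda$ denotes the set of functions $f$ analytic in $\mathbb{D}$ with $f(0)=0$, $f'(0)=1$, such that $zf'(z)-f(z)=\lambda z^2\phi(z)$ for some analytic $\phi$ on $\mathbb{D}$ with $|\phi(z)|\le1$. *)

(* Defs.v *)
From Stdlib Require Import Reals.
From Coquelicot Require Import Coquelicot.
Open Scope R_scope.

Definition unit_disk (z : C) : Prop := Cmod z < 1.

Definition has_cderiv (f : C -> C) (z : C) (l : C) : Prop :=
  @is_derive C_AbsRing C_NormedModule f z l.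

Definition analytic_in_disk (f : C -> C) : Prop :=
  forall z, unit_disk z -> exists l, has_cderiv f z l.

Definition Omega (lam : R) (f : C -> C) : Prop :=
  exists f1 : C -> C,
    (forall z, unit_disk z -> has_cderiv f z (f1 z)) /\
    f (RtoC 0) = RtoC 0 /\ f1 (RtoC 0) = RtoC 1 /\
    exists phi : C -> C,
      analytic_in_disk phi /\
      (forall z, unit_disk z -> Cmod (phi z) <= 1) /\
      (forall z, unit_disk z ->
         Cminus (Cmult z (f1 z)) (f z) = Cmult (Cmult (RtoC lam) (Cmult z z)) (phi z)).

(* Main.v *)
Require Import Defs.
From Stdlib Require Import Reals Lra.
From Coquelicot Require Import Coquelicot.
Open Scope R_scope.


Lemma derive_eps {K : AbsRing} {V : NormedModule K} (f : K -> V) x l :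
  is_derive f x l <-> forall eps : posreal, exists delta : posreal, forall y,
    norm (minus y x) < delta ->
    norm (minus (minus (f y) (f x)) (scal (minus y x) l)) <= eps * norm (minus y x).
Proof.
  split.
  - intros [_ Hd] eps.
    assert (Hx : is_filter_lim (locally x) x) by (intros P HP; exact HP).
    specialize (Hd x Hx eps).
    destruct (locally_le_locally_norm x _ Hd) as [d Hd2]. exists d. intros y Hy. apply Hd2. apply norm_compat1. exact Hy.
  - intros H. split.
    + apply is_linear_scal_l.
    + intros x' Hx' eps.
      apply (@is_filter_lim_locally_unique K (AbsRing_NormedModule K)) in Hx'. subst x'.
      apply (locally_norm_le_locally x).
      destruct (H eps) as [d Hd]. exists d. intros y Hy. apply Hd. exact Hy.
Qed.

Lemma cderiv_eps (f : C -> C) z l :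
  has_cderiv f z l <-> forall eps, 0 < eps -> exists delta, 0 < delta /\ forall w,
    Cmod (w - z) < delta -> Cmod (f w - f z - l * (w - z))%C <= eps * Cmod (w - z).
Proof.
  unfold has_cderiv. rewrite derive_eps. split.
  - intros H eps Heps. destruct (H (mkposreal eps Heps)) as [d Hd].
    exists d. split; [apply cond_pos|]. intros w Hw.
    specialize (Hd w Hw). simpl in Hd.
    replace (f w - f z - l * (w - z))%C with (minus (minus (f w) (f z)) (scal (minus w z) l)).
    exact Hd. unfold minus, plus, opp, scal; simpl. 
    unfold mult; simpl. unfold Cminus. ring.
  - intros H eps. destruct (H eps (cond_pos eps)) as [d [Hd0 Hd]].
    exists (mkposreal d Hd0). intros y Hy. simpl in Hy.
    specialize (Hd y Hy).
    unfold minus, plus, opp, scal; simpl.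
    change (norm ?x) with (Cmod x). change (mult ?a ?b) with (Cmult a b).
    replace (f y + - f z + - ((y + - z) * l))%C with (f y - f z - l * (y - z))%C.
    exact Hd. unfold Cminus. ring.
Qed.

Lemma rderiv_aux (g : R -> C) (s w : R) (l : C) :
  @norm R_AbsRing C_R_NormedModule (@minus C_R_NormedModule (@minus C_R_NormedModule (g w) (g s)) (@scal R_AbsRing C_R_NormedModule (@minus (AbsRing_NormedModule R_AbsRing) w s) l))
  = Cmod (g w - g s - RtoC (w - s) * l)%C.
Proof.
  rewrite <- Cmod_norm, scal_R_Cmult. reflexivity.
Qed.

Lemma rderiv_eps (g : R -> C) s l :
  @is_derive R_AbsRing C_R_NormedModule g s l <-> forall eps, 0 < eps -> exists delta, 0 < delta /\ forall t,
    Rabs (t - s) < delta -> Cmod (g t - g s - RtoC (t - s) * l)%C <= eps * Rabs (t - s).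
Proof.
  rewrite derive_eps. split.
  - intros H eps Heps. destruct (H (mkposreal eps Heps)) as [d Hd].
    exists d. split; [apply cond_pos|]. intros w Hw.
    specialize (Hd w Hw). rewrite rderiv_aux in Hd. exact Hd.
  - intros H eps. destruct (H eps (cond_pos eps)) as [d [Hd0 Hd]].
    exists (mkposreal d Hd0). intros y Hy. simpl in Hy.
    specialize (Hd y Hy).
    rewrite rderiv_aux. exact Hd.
Qed.


Definition rderiv (g : R -> C) (s : R) (l : C) := @is_derive R_AbsRing C_R_NormedModule g s l.

Lemma Cmod_rev (x y : C) : Cmod x - Cmod y <= Cmod (x - y).
Proof.
  assert (H := Cmod_triangle (x - y) y).
  replace (x - y + y)%C with x in H by ring. lra.
Qed.

Lemma Cmod_sub_sym (x y : C) : Cmod (x - y) = Cmod (y - x).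
Proof. rewrite <- Cmod_opp. f_equal. ring. Qed.

Lemma Cmod_tri3 (a b c : C) : Cmod (a + b + c) <= Cmod a + Cmod b + Cmod c.
Proof.
  eapply Rle_trans; [apply Cmod_triangle|]. 
  assert (H := Cmod_triangle a b). lra.
Qed.

Lemma C_decomp (x : C) : x = (RtoC (Re x) + Ci * RtoC (Im x))%C.
Proof. destruct x as [a b]. unfold Re, Im, RtoC, Ci, Cplus, Cmult; simpl. f_equal; ring. Qed.

Lemma Cmod_le_sum (x : C) : Cmod x <= Rabs (Re x) + Rabs (Im x).
Proof.
  rewrite (C_decomp x) at 1. eapply Rle_trans; [apply Cmod_triangle|].
  rewrite Cmod_mult, Cmod_Ci, !Cmod_R. lra.
Qed.

Lemma rderiv_chain (f : C -> C) (q : R -> C) s dq l :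
  rderiv q s dq -> has_cderiv f (q s) l -> rderiv (fun t => f (q t)) s (l * dq)%C.
Proof.
  unfold rderiv. rewrite !rderiv_eps. intros Hq Hf. rewrite cderiv_eps in Hf.
  intros eps Heps.
  set (A := Cmod dq + 1). set (B := Cmod l + 1).
  assert (HA : 0 < A) by (unfold A; generalize (Cmod_ge_0 dq); lra).
  assert (HB : 0 < B) by (unfold B; generalize (Cmod_ge_0 l); lra).
  destruct (Hq 1 Rlt_0_1) as [d1 [Hd1 H1]].
  destruct (Hq (eps / (2 * B))) as [d3 [Hd3 H3]].
  { apply Rdiv_lt_0_compat; lra. }
  destruct (Hf (eps / (2 * A))) as [d2 [Hd2 H2]].
  { apply Rdiv_lt_0_compat; lra. }
  exists (Rmin d1 (Rmin d3 (d2 / A))). split.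
  { apply Rmin_pos; [lra|apply Rmin_pos; [lra|apply Rdiv_lt_0_compat; lra]]. }
  intros t Ht.
  assert (Ht1 : Rabs (t - s) < d1) by (eapply Rlt_le_trans; [exact Ht|apply Rmin_l]).
  assert (Ht3 : Rabs (t - s) < d3) by (eapply Rlt_le_trans; [exact Ht|]; eapply Rle_trans; [apply Rmin_r|apply Rmin_l]).
  assert (Ht2 : Rabs (t - s) < d2 / A) by (eapply Rlt_le_trans; [exact Ht|]; eapply Rle_trans; [apply Rmin_r|apply Rmin_r]).
  specialize (H1 t Ht1). specialize (H3 t Ht3).
  assert (HL : Cmod (q t - q s) <= A * Rabs (t - s)).
  { replace (q t - q s)%C with ((q t - q s - RtoC (t - s) * dq) + RtoC (t - s) * dq)%C by ring.
    eapply Rle_trans; [apply Cmod_triangle|]. rewrite Cmod_mult, Cmod_R.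
    unfold A. nra. }
  assert (Hqt : Cmod (q t - q s) < d2).
  { destruct (Req_dec (t - s) 0) as [E|E].
    - replace t with s by lra. replace (q s - q s)%C with (RtoC 0) by ring. rewrite Cmod_0. lra.
    - apply Rle_lt_trans with (A * Rabs (t - s)); [exact HL|].
      apply Rmult_lt_reg_l with (/ A). apply Rinv_0_lt_compat; lra.
      rewrite <- Rmult_assoc, Rinv_l by lra. rewrite Rmult_1_l.
      replace (/ A * d2) with (d2 / A) by (unfold Rdiv; ring). exact Ht2. }
  specialize (H2 (q t) Hqt).
  replace (f (q t) - f (q s) - RtoC (t - s) * (l * dq))%C with
    ((f (q t) - f (q s) - l * (q t - q s)) + l * (q t - q s - RtoC (t - s) * dq))%C by ring.
  eapply Rle_trans; [apply Cmod_triangle|]. rewrite Cmod_mult.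
  assert (E1 : eps / (2 * A) * Cmod (q t - q s) <= eps / 2 * Rabs (t - s)).
  { apply Rle_trans with (eps / (2 * A) * (A * Rabs (t - s))).
    apply Rmult_le_compat_l; [apply Rlt_le, Rdiv_lt_0_compat; lra|exact HL].
    right. field. lra. }
  assert (E2 : Cmod l * Cmod (q t - q s - RtoC (t - s) * dq) <= eps / 2 * Rabs (t - s)).
  { apply Rle_trans with (B * (eps / (2 * B) * Rabs (t - s))).
    apply Rmult_le_compat; [apply Cmod_ge_0|apply Cmod_ge_0|unfold B; lra|exact H3].
    right. field. lra. }
  lra.
Qed.

Lemma rderiv_affine (a b : C) s : rderiv (fun t => a + RtoC t * b)%C s b.
Proof.
  unfold rderiv. rewrite rderiv_eps. intros eps Heps. exists 1. split; [lra|].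
  intros t _. replace (a + RtoC t * b - (a + RtoC s * b) - RtoC (t - s) * b)%C with (RtoC 0).
  rewrite Cmod_0. generalize (Rabs_pos (t - s)). nra.
  rewrite RtoC_minus. ring.
Qed.

Lemma rderiv_cmult (g : R -> C) c s l : rderiv g s l -> rderiv (fun t => c * g t)%C s (c * l)%C.
Proof.
  unfold rderiv. rewrite !rderiv_eps. intros H eps Heps.
  destruct (H (eps / (Cmod c + 1))) as [d [Hd Hd2]].
  { apply Rdiv_lt_0_compat; generalize (Cmod_ge_0 c); lra. }
  exists d. split; auto. intros t Ht.
  replace (c * g t - c * g s - RtoC (t - s) * (c * l))%C with (c * (g t - g s - RtoC (t - s) * l))%C by ring.
  rewrite Cmod_mult. specialize (Hd2 t Ht).
  apply Rle_trans with ((Cmod c + 1) * (eps / (Cmod c + 1) * Rabs (t - s))).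
  apply Rmult_le_compat; try apply Cmod_ge_0; try lra. 
  right. field. generalize (Cmod_ge_0 c); lra.
Qed.

Lemma rderiv_Re (g : R -> C) s l : rderiv g s l -> is_derive (fun t => Re (g t)) s (Re l).
Proof.
  unfold rderiv. rewrite rderiv_eps. intros H.
  apply is_derive_Reals. intros eps Heps.
  destruct (H (eps / 2)) as [d [Hd Hd2]]; [lra|].
  exists (mkposreal d Hd). intros h Hh0 Hh. simpl in Hh.
  specialize (Hd2 (s + h)). replace (s + h - s) with h in Hd2 by ring.
  specialize (Hd2 Hh).
  assert (E : Rabs (Re (g (s + h)) - Re (g s) - h * Re l) <= eps / 2 * Rabs h).
  { eapply Rle_trans; [|exact Hd2]. eapply Rle_trans; [|apply re_le_Cmod].
    right. f_equal. unfold Re; simpl. ring. }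
  replace ((Re (g (s + h)) - Re (g s)) / h - Re l) with ((Re (g (s + h)) - Re (g s) - h * Re l) / h) by (field; auto).
  unfold Rdiv. rewrite Rabs_mult, Rabs_Rinv by auto.
  apply Rle_lt_trans with (eps / 2 * Rabs h * / Rabs h).
  apply Rmult_le_compat_r; [apply Rlt_le, Rinv_0_lt_compat, Rabs_pos_lt; auto|exact E].
  field_simplify; [lra|]. apply Rabs_no_R0; auto.
Qed.

Lemma rderiv_pair (u v : R -> R) s du dv :
  is_derive u s du -> is_derive v s dv -> rderiv (fun t => (u t, v t)) s (du, dv).
Proof.
  intros Hu Hv. unfold rderiv. rewrite rderiv_eps.
  rewrite derive_eps in Hu, Hv. intros eps Heps.
  destruct (Hu (mkposreal (eps/2) ltac:(lra))) as [d1 H1].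
  destruct (Hv (mkposreal (eps/2) ltac:(lra))) as [d2 H2].
  exists (Rmin d1 d2). split; [apply Rmin_pos; apply cond_pos|]. intros t Ht.
  specialize (H1 t). specialize (H2 t).
  change (norm (minus t s)) with (Rabs (t - s)) in H1, H2.
  assert (A1 : Rabs (t - s) < d1) by (eapply Rlt_le_trans; [exact Ht|apply Rmin_l]).
  assert (A2 : Rabs (t - s) < d2) by (eapply Rlt_le_trans; [exact Ht|apply Rmin_r]).
  specialize (H1 A1). specialize (H2 A2). simpl in H1, H2.
  change (norm ?x) with (Rabs x) in H1, H2.
  change (minus ?a ?b) with (a - b) in H1, H2.
  change (scal ?a ?b) with (a * b) in H1, H2.
  eapply Rle_trans; [apply Cmod_le_sum|]. simpl.
  replace (u t + - u s + - ((t - s) * du - 0 * dv)) with (u t - u s - (t - s) * du) by ring.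
  replace (v t + - v s + - ((t - s) * dv + 0 * du)) with (v t - v s - (t - s) * dv) by ring.
  change (minus ?a ?b) with (a - b) in H1, H2. lra.
Qed.


Definition CInt (f : R -> C) a b : C := @RInt C_R_CompleteNormedModule f a b.
Definition is_CInt (f : R -> C) a b (l : C) := @is_RInt C_R_NormedModule f a b l.
Definition ex_CInt (f : R -> C) a b := @ex_RInt C_R_NormedModule f a b.
Definition ccont (h : R -> C) x := @continuous R_UniformSpace C_UniformSpace h x.

Lemma ccont_eps (h : R -> C) x : ccont h x <->
  forall eps, 0 < eps -> exists d, 0 < d /\ forall y, Rabs (y - x) < d -> Cmod (h y - h x) < eps.
Proof.
  split.
  - intros H eps Heps.
    assert (HP : locally (h x) (fun w : C => Cmod (w - h x) < eps)).
    { apply (@locally_le_locally_norm C_AbsRing C_NormedModule (h x)).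
      exists (mkposreal eps Heps). intros w Hw. exact Hw. }
    specialize (H _ HP). destruct H as [d Hd]. exists d. split; [apply cond_pos|].
    intros y Hy. apply Hd. exact Hy.
  - intros H P HP.
    destruct (@locally_norm_le_locally C_AbsRing C_NormedModule (h x) P HP) as [e He].
    destruct (H e (cond_pos e)) as [d [Hd Hd2]].
    exists (mkposreal d Hd). intros y Hy. apply He. apply Hd2. exact Hy.
Qed.

Definition ccontC (h : C -> C) z := @continuous (AbsRing_UniformSpace C_AbsRing) C_NormedModule h z.

Lemma cont_CC_eps (h : C -> C) z : ccontC h z ->
  forall eps, 0 < eps -> exists d, 0 < d /\ forall w, Cmod (w - z) < d -> Cmod (h w - h z) < eps.
Proof.
  intros H eps Heps.
  assert (HP : locally (h z) (fun w : C => Cmod (w - h z) < eps)).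
  { apply (@locally_le_locally_norm C_AbsRing C_NormedModule (h z)).
    exists (mkposreal eps Heps). intros w Hw. exact Hw. }
  specialize (H _ HP).
  destruct H as [d Hd].
  exists d. split; [apply cond_pos|]. intros w Hw. apply Hd. exact Hw.
Qed.

Lemma cderiv_cont (h : C -> C) z l : has_cderiv h z l -> ccontC h z.
Proof. intros H. apply (@ex_derive_continuous C_AbsRing C_NormedModule). exists l. exact H. Qed.

Lemma rderiv_cont (h : R -> C) s l : rderiv h s l -> ccont h s.
Proof. intros H. apply (@ex_derive_continuous R_AbsRing C_R_NormedModule). exists l. exact H. Qed.

Lemma ccont_comp (q : R -> C) (h : C -> C) s : ccont q s -> ccontC h (q s) -> ccont (fun t => h (q t)) s.
Proof.
  intros H1 H2. apply ccont_eps. intros eps Heps.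
  destruct (cont_CC_eps h (q s) H2 eps Heps) as [d [Hd Hd2]].
  rewrite ccont_eps in H1. destruct (H1 d Hd) as [d' [Hd' Hd'2]].
  exists d'. split; auto.
Qed.

Lemma mult_close (a a0 b b0 : C) eps : 0 < eps ->
  Cmod (a - a0) < Rmin 1 (eps / (Cmod b0 + Cmod a0 + 2)) ->
  Cmod (b - b0) < Rmin 1 (eps / (Cmod b0 + Cmod a0 + 2)) ->
  Cmod (a * b - a0 * b0) < eps.
Proof.
  intros He Ha Hb. set (M := Cmod b0 + Cmod a0 + 2) in *.
  assert (HM : 0 < M) by (unfold M; generalize (Cmod_ge_0 a0) (Cmod_ge_0 b0); lra).
  set (e := Rmin 1 (eps / M)) in *.
  assert (He1 : e <= 1) by apply Rmin_l. assert (He2 : e <= eps / M) by apply Rmin_r.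
  replace (a * b - a0 * b0)%C with ((a - a0) * (b - b0) + (a - a0) * b0 + a0 * (b - b0))%C by ring.
  eapply Rle_lt_trans; [apply Cmod_tri3|]. rewrite !Cmod_mult.
  generalize (Cmod_ge_0 (a - a0)) (Cmod_ge_0 (b - b0)) (Cmod_ge_0 a0) (Cmod_ge_0 b0). intros.
  apply Rlt_le_trans with (e * M).
  { unfold M. set (x := Cmod (a - a0)) in *. set (y := Cmod (b - b0)) in *.
    assert (x * y <= x * 1) by (apply Rmult_le_compat_l; lra).
    assert (x * Cmod b0 <= e * Cmod b0) by (apply Rmult_le_compat_r; lra).
    assert (Cmod a0 * y <= Cmod a0 * e) by (apply Rmult_le_compat_l; lra).
    lra. }
  apply Rle_trans with (eps / M * M). apply Rmult_le_compat_r; lra. right; field; lra.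
Qed.

Lemma ccont_mult (p q : R -> C) s : ccont p s -> ccont q s -> ccont (fun t => p t * q t)%C s.
Proof.
  rewrite !ccont_eps. intros H1 H2 eps Heps.
  set (e := Rmin 1 (eps / (Cmod (q s) + Cmod (p s) + 2))).
  assert (He : 0 < e).
  { apply Rmin_pos; [lra|apply Rdiv_lt_0_compat; [lra|generalize (Cmod_ge_0 (p s)) (Cmod_ge_0 (q s)); lra]]. }
  destruct (H1 e He) as [d1 [Hd1 H1']]. destruct (H2 e He) as [d2 [Hd2 H2']].
  exists (Rmin d1 d2). split; [apply Rmin_pos; auto|]. intros y Hy.
  apply mult_close; auto.
  apply H1'. eapply Rlt_le_trans; [exact Hy|apply Rmin_l].
  apply H2'. eapply Rlt_le_trans; [exact Hy|apply Rmin_r].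
Qed.

Lemma ccont_plus (p q : R -> C) s : ccont p s -> ccont q s -> ccont (fun t => p t + q t)%C s.
Proof.
  rewrite !ccont_eps. intros H1 H2 eps Heps.
  destruct (H1 (eps/2)) as [d1 [Hd1 H1']]; [lra|]. destruct (H2 (eps/2)) as [d2 [Hd2 H2']]; [lra|].
  exists (Rmin d1 d2). split; [apply Rmin_pos; auto|]. intros y Hy.
  replace (p y + q y - (p s + q s))%C with ((p y - p s) + (q y - q s))%C by ring.
  eapply Rle_lt_trans; [apply Cmod_triangle|].
  assert (Cmod (p y - p s) < eps/2) by (apply H1'; eapply Rlt_le_trans; [exact Hy|apply Rmin_l]).
  assert (Cmod (q y - q s) < eps/2) by (apply H2'; eapply Rlt_le_trans; [exact Hy|apply Rmin_r]).
  lra.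
Qed.

Lemma ccont_const (c : C) s : ccont (fun _ => c) s.
Proof. apply ccont_eps. intros eps Heps. exists 1. split; [lra|]. intros y _.
  replace (c - c)%C with (RtoC 0) by ring. rewrite Cmod_0. lra. Qed.

Lemma cinv_deriv (w : C) : w <> 0%C -> has_cderiv Cinv w (- / (w * w))%C.
Proof.
  intros Hw. rewrite cderiv_eps. intros eps Heps.
  set (m := Cmod w).
  assert (Hm : 0 < m) by (apply Cmod_gt_0; auto).
  exists (Rmin (m / 2) (eps * m * m * m / 2)). split.
  { apply Rmin_pos; [lra|]. apply Rdiv_lt_0_compat; [|lra]. repeat apply Rmult_lt_0_compat; lra. }
  intros v Hv.
  assert (Hv1 : Cmod (v - w) < m / 2) by (eapply Rlt_le_trans; [exact Hv|apply Rmin_l]).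
  assert (Hv2 : Cmod (v - w) < eps * m * m * m / 2) by (eapply Rlt_le_trans; [exact Hv|apply Rmin_r]).
  assert (Hvm : m / 2 <= Cmod v).
  { generalize (Cmod_rev w v). rewrite Cmod_sub_sym. fold m. lra. }
  assert (Hv0 : v <> 0%C) by (apply Cmod_gt_0; lra).
  replace (/ v - / w - - / (w * w) * (v - w))%C with ((v - w) * (v - w) / (w * w * v))%C
    by (field; auto).
  rewrite Cmod_div by (apply Cmult_neq_0; [apply Cmult_neq_0|]; auto).
  rewrite !Cmod_mult. fold m.
  apply Rmult_le_reg_r with (m * m * Cmod v). 
  { apply Rmult_lt_0_compat; [nra|lra]. }
  field_simplify; try nra.
  set (x := Cmod (v - w)) in *. assert (0 <= x) by apply Cmod_ge_0.
  assert (x * (m ^ 2 * eps) * (m / 2) <= x * (m ^ 2 * eps) * Cmod v).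
  { apply Rmult_le_compat_l; [|lra]. apply Rmult_le_pos; [lra|]. apply Rmult_le_pos; nra. }
  assert (x * x <= x * (eps * m * m * m / 2)) by (apply Rmult_le_compat_l; lra).
  nra.
Qed.


Lemma is_CInt_Cmult (f : R -> C) a b l c : is_CInt f a b l -> is_CInt (fun t => c * f t)%C a b (c * l)%C.
Proof.
  unfold is_CInt. intros H.
  change (@is_RInt (prod_NormedModule _ R_NormedModule R_NormedModule) (fun t => c * f t)%C a b (c * l)%C).
  change (@is_RInt (prod_NormedModule _ R_NormedModule R_NormedModule) f a b l) in H.
  assert (H1 := is_RInt_fct_extend_fst _ _ _ _ H).
  assert (H2 := is_RInt_fct_extend_snd _ _ _ _ H).
  destruct c as [c1 c2]. destruct l as [l1 l2].
  apply (is_RInt_fct_extend_pair (fun t => (c1, c2) * f t)%C a b).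
  - simpl. eapply is_RInt_ext; [|apply (@is_RInt_minus R_NormedModule);
      [apply (@is_RInt_scal R_NormedModule _ _ _ c1 _ H1)|apply (@is_RInt_scal R_NormedModule _ _ _ c2 _ H2)]].
    intros x _. simpl. change (scal ?a ?b) with (a * b). unfold minus, plus, opp; simpl. ring.
  - simpl. eapply is_RInt_ext; [|apply (@is_RInt_plus R_NormedModule);
      [apply (@is_RInt_scal R_NormedModule _ _ _ c1 _ H2)|apply (@is_RInt_scal R_NormedModule _ _ _ c2 _ H1)]].
    intros x _. simpl. change (scal ?a ?b) with (a * b). unfold plus; simpl. ring.
Qed.

Lemma is_CInt_plus (f g : R -> C) a b l1 l2 : is_CInt f a b l1 -> is_CInt g a b l2 ->
  is_CInt (fun t => f t + g t)%C a b (l1 + l2)%C.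
Proof. intros H1 H2. apply (@is_RInt_plus C_R_NormedModule _ _ _ _ _ _ H1 H2). Qed.

Lemma is_CInt_minus (f g : R -> C) a b l1 l2 : is_CInt f a b l1 -> is_CInt g a b l2 ->
  is_CInt (fun t => f t - g t)%C a b (l1 - l2)%C.
Proof. intros H1 H2. apply (@is_RInt_minus C_R_NormedModule _ _ _ _ _ _ H1 H2). Qed.

Lemma is_CInt_ext (f g : R -> C) a b l : (forall t, f t = g t) -> is_CInt f a b l -> is_CInt g a b l.
Proof. intros E H. apply (@is_RInt_ext C_R_NormedModule f g); auto. Qed.

Lemma CInt_correct (f : R -> C) a b : ex_CInt f a b -> is_CInt f a b (CInt f a b).
Proof. intros H. apply (@RInt_correct C_R_CompleteNormedModule). exact H. Qed.

Lemma CInt_unique (f : R -> C) a b l : is_CInt f a b l -> CInt f a b = l.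
Proof. intros H. apply (@is_RInt_unique C_R_CompleteNormedModule). exact H. Qed.

Lemma is_CInt_uniq (f : R -> C) a b l1 l2 : is_CInt f a b l1 -> is_CInt f a b l2 -> l1 = l2.
Proof. intros H1 H2. rewrite <- (CInt_unique _ _ _ _ H1). apply CInt_unique; auto. Qed.

Lemma ex_CInt_cont (f : R -> C) a b : (forall t, ccont f t) -> ex_CInt f a b.
Proof. intros H. apply (@ex_RInt_continuous C_R_CompleteNormedModule). intros z _. apply H. Qed.

Lemma is_CInt_bound (f : R -> C) a b l M : a <= b -> (forall t, a <= t <= b -> Cmod (f t) <= M) ->
  is_CInt f a b l -> Cmod l <= (b - a) * M.
Proof.
  intros Hab Hb H. rewrite Cmod_norm.
  apply (@norm_RInt_le_const C_R_NormedModule f a b l M Hab); auto.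
  intros x Hx. rewrite <- Cmod_norm. auto.
Qed.

Lemma is_CInt_Re (f : R -> C) a b l : is_CInt f a b l -> is_RInt (fun t => Re (f t)) a b (Re l).
Proof.
  unfold is_CInt. intros H.
  change (@is_RInt (prod_NormedModule _ R_NormedModule R_NormedModule) f a b l) in H.
  exact (is_RInt_fct_extend_fst _ _ _ _ H).
Qed.

Lemma is_CInt_Im (f : R -> C) a b l : is_CInt f a b l -> is_RInt (fun t => Im (f t)) a b (Im l).
Proof.
  unfold is_CInt. intros H.
  change (@is_RInt (prod_NormedModule _ R_NormedModule R_NormedModule) f a b l) in H.
  exact (is_RInt_fct_extend_snd _ _ _ _ H).
Qed.

Lemma is_CInt_FTC (h dh : R -> C) a b : a <= b -> (forall t, a <= t <= b -> rderiv h t (dh t)) ->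
  (forall t, a <= t <= b -> ccont dh t) ->
  is_CInt dh a b (h b - h a)%C.
Proof.
  intros Hab H1 H2. apply (@is_RInt_derive C_R_CompleteNormedModule h dh a b).
  intros; apply H1; rewrite Rmin_left, Rmax_right in *; auto.
  intros; apply H2; rewrite Rmin_left, Rmax_right in *; auto.
Qed.

Lemma is_CInt_zero a b : is_CInt (fun _ => RtoC 0) a b (RtoC 0).
Proof.
  unfold is_CInt. 
  assert (H := @is_RInt_const C_R_NormedModule a b (RtoC 0)).
  assert (E : @scal R_AbsRing C_R_NormedModule (b - a) (RtoC 0) = RtoC 0) by (rewrite scal_R_Cmult; apply Cmult_0_r).
  revert H. match goal with |- is_RInt _ _ _ ?x -> _ => replace x with (RtoC 0) end; auto.
Qed.

Definition gam (t : R) : C := (/2 * cos t, /2 * sin t).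

Lemma gam_deriv t : rderiv gam t (Ci * gam t)%C.
Proof.
  replace (Ci * gam t)%C with (/2 * - sin t, /2 * cos t) by
    (unfold Ci, gam, Cmult; simpl; f_equal; ring).
  apply rderiv_pair; auto_derive; auto; ring.
Qed.

Lemma gam_cont t : ccont gam t.
Proof. eapply rderiv_cont. apply gam_deriv. Qed.

Lemma Cmod_gam t : Cmod (gam t) = /2.
Proof.
  unfold Cmod, gam; simpl.
  replace (/ 2 * cos t * (/ 2 * cos t * 1) + / 2 * sin t * (/ 2 * sin t * 1)) with ((/2) ^ 2 * ((sin t)² + (cos t)²)) by (unfold Rsqr; ring).
  rewrite sin2_cos2, Rmult_1_r. apply sqrt_pow2. lra.
Qed.

Lemma gam_per : gam (2 * PI) = gam 0.
Proof. unfold gam. rewrite cos_2PI, sin_2PI, cos_0, sin_0. reflexivity. Qed.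

Lemma gam_dist t z : Cmod z < /2 -> /2 - Cmod z <= Cmod (gam t - z).
Proof. intros H. generalize (Cmod_rev (gam t) z). rewrite Cmod_gam. lra. Qed.

Lemma gam_neq t z : Cmod z < /2 -> (gam t - z)%C <> 0%C.
Proof. intros H. apply Cmod_gt_0. generalize (gam_dist t z H). lra. Qed.

Lemma gam_neq0 t : gam t <> 0%C.
Proof. apply Cmod_gt_0. rewrite Cmod_gam. lra. Qed.


Definition jcont (F : R -> R -> C) s0 t0 := forall eps, 0 < eps -> exists d, 0 < d /\
  forall s t, Rabs (s - s0) < d -> Rabs (t - t0) < d -> Cmod (F s t - F s0 t0) < eps.

Lemma jcont_ccont (F : R -> R -> C) s0 t0 : jcont F s0 t0 -> ccont (F s0) t0.
Proof.
  intros H. apply ccont_eps. intros eps Heps. destruct (H eps Heps) as [d [Hd H2]].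
  exists d. split; auto. intros y Hy. apply H2; auto. rewrite Rminus_diag, Rabs_R0. auto.
Qed.

Lemma param_Re (F D : R -> R -> C) a b s0 d0 : 0 < d0 ->
  (forall s t, Rabs (s - s0) < d0 -> rderiv (fun u => F u t) s (D s t)) ->
  (forall t, jcont D s0 t) ->
  (forall s t, Rabs (s - s0) < d0 -> ccont (F s) t) ->
  is_derive (fun s => Re (CInt (F s) a b)) s0 (Re (CInt (D s0) a b)).
Proof.
  intros Hd0 HF HD HC.
  assert (HDer : forall s t, Rabs (s - s0) < d0 -> Derive (fun u => Re (F u t)) s = Re (D s t)).
  { intros s t Hs. apply is_derive_unique. apply rderiv_Re. apply HF; auto. }
  assert (E0 : Rabs (s0 - s0) < d0) by (rewrite Rminus_diag, Rabs_R0; auto).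
  assert (HReI : forall s, Rabs (s - s0) < d0 -> is_RInt (fun t => Re (F s t)) a b (Re (CInt (F s) a b))).
  { intros s Hs. apply is_CInt_Re. apply CInt_correct. apply ex_CInt_cont. intros; apply HC; auto. }
  apply is_derive_ext_loc with (fun s => RInt (fun t => Re (F s t)) a b).
  { exists (mkposreal d0 Hd0). intros s Hs. apply is_RInt_unique. apply HReI. exact Hs. }
  replace (Re (CInt (D s0) a b)) with (RInt (fun t => Derive (fun u => Re (F u t)) s0) a b).
  apply is_derive_RInt_param.
  - exists (mkposreal d0 Hd0). intros s Hs t _. eexists. apply rderiv_Re. apply HF. exact Hs.
  - intros t _ eps. destruct (HD t eps (cond_pos eps)) as [d [Hd Hd2]].
    exists (mkposreal (Rmin d d0) (Rmin_pos _ _ Hd Hd0)). intros u v Hu Hv. simpl in Hu, Hv.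
    rewrite !HDer; auto. 2: eapply Rlt_le_trans; [exact Hu|apply Rmin_r].
    eapply Rle_lt_trans; [|apply (Hd2 u v)].
    + eapply Rle_trans; [|apply re_le_Cmod]. right. f_equal.
    + eapply Rlt_le_trans; [exact Hu|apply Rmin_l].
    + eapply Rlt_le_trans; [exact Hv|apply Rmin_l].
  - exists (mkposreal d0 Hd0). intros s Hs. eexists. apply HReI. exact Hs.
  - apply is_RInt_unique. eapply is_RInt_ext; [|apply is_CInt_Re; apply CInt_correct].
    + intros t _. symmetry. apply HDer; auto.
    + apply ex_CInt_cont. intros t. apply jcont_ccont. apply HD.
Qed.

Lemma jcont_cmult (F : R -> R -> C) c s0 t0 : jcont F s0 t0 -> jcont (fun s t => c * F s t)%C s0 t0.
Proof.
  intros H eps Heps. destruct (H (eps / (Cmod c + 1))) as [d [Hd H2]].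
  { apply Rdiv_lt_0_compat; generalize (Cmod_ge_0 c); lra. }
  exists d. split; auto. intros s t Hs Ht.
  replace (c * F s t - c * F s0 t0)%C with (c * (F s t - F s0 t0))%C by ring.
  rewrite Cmod_mult. specialize (H2 s t Hs Ht).
  apply Rle_lt_trans with ((Cmod c + 1) * Cmod (F s t - F s0 t0)).
  apply Rmult_le_compat_r; [apply Cmod_ge_0|lra].
  apply Rlt_le_trans with ((Cmod c + 1) * (eps / (Cmod c + 1))).
  apply Rmult_lt_compat_l; [generalize (Cmod_ge_0 c); lra|auto].
  right. field. generalize (Cmod_ge_0 c); lra.
Qed.

Lemma CInt_Cmult (f : R -> C) a b c : ex_CInt f a b -> CInt (fun t => c * f t)%C a b = (c * CInt f a b)%C.
Proof. intros H. apply CInt_unique. apply is_CInt_Cmult. apply CInt_correct. auto. Qed.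

Lemma Re_mCi (x : C) : Re (- Ci * x)%C = Im x.
Proof. destruct x as [x1 x2]. unfold Re, Im, Ci, Cmult, Copp; simpl. ring. Qed.

Lemma C_eta (x : C) : (Re x, Im x) = x.
Proof. destruct x; reflexivity. Qed.

Lemma param_deriv (F D : R -> R -> C) a b s0 d0 : 0 < d0 ->
  (forall s t, Rabs (s - s0) < d0 -> rderiv (fun u => F u t) s (D s t)) ->
  (forall t, jcont D s0 t) ->
  (forall s t, Rabs (s - s0) < d0 -> ccont (F s) t) ->
  rderiv (fun s => CInt (F s) a b) s0 (CInt (D s0) a b).
Proof.
  intros Hd0 HF HD HC.
  assert (H1 := param_Re F D a b s0 d0 Hd0 HF HD HC).
  assert (H2 : is_derive (fun s => Re (CInt (fun t => (- Ci) * F s t)%C a b)) s0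
              (Re (CInt (fun t => (- Ci) * D s0 t)%C a b))).
  { apply (param_Re (fun s t => (- Ci * F s t)%C) (fun s t => (- Ci * D s t)%C) a b s0 d0 Hd0).
    - intros s t Hs. apply rderiv_cmult. apply HF. exact Hs.
    - intros t. apply jcont_cmult. apply HD.
    - intros s t Hs. apply ccont_mult. apply ccont_const. apply HC. exact Hs. }
  rewrite CInt_Cmult in H2.
  2: { apply ex_CInt_cont. intros t. apply jcont_ccont. apply HD. }
  assert (H3 : is_derive (fun s => Im (CInt (F s) a b)) s0 (Im (CInt (D s0) a b))).
  { eapply is_derive_ext_loc; [|rewrite Re_mCi in H2; exact H2].
    exists (mkposreal d0 Hd0). intros s Hs. rewrite CInt_Cmult.
    + apply Re_mCi.
    + apply ex_CInt_cont. intros t. apply HC. exact Hs. }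
  assert (H4 := rderiv_pair _ _ _ _ _ H1 H3).
  unfold rderiv in *. rewrite C_eta in H4.
  eapply is_derive_ext; [|exact H4].
  intros t. apply C_eta.
Qed.


Definition T := 2 * PI.
Lemma T_pos : 0 < T.
Proof. unfold T. generalize PI_RGT_0. lra. Qed.

Definition J1 (a : R -> C) z := CInt (fun t => a t * / (gam t - z))%C 0 T.
Definition J2 (a : R -> C) z := CInt (fun t => a t * / ((gam t - z) * (gam t - z)))%C 0 T.
Definition J3 (a : R -> C) z := CInt (fun t => a t * / ((gam t - z) * (gam t - z) * (gam t - z)))%C 0 T.

Lemma ccont_inv (p : R -> C) t : ccont p t -> p t <> 0%C -> ccont (fun t => / p t)%C t.
Proof.
  intros H1 H2. apply (ccont_comp p Cinv); auto.
  eapply cderiv_cont. apply cinv_deriv. auto.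
Qed.

Lemma ccont_gz z t : ccont (fun t => gam t - z)%C t.
Proof. apply ccont_plus. apply gam_cont. apply ccont_const. Qed.

Lemma ex_J1 a z : (forall t, ccont a t) -> Cmod z < /2 -> is_CInt (fun t => a t * / (gam t - z))%C 0 T (J1 a z).
Proof.
  intros Ha Hz. apply CInt_correct. apply ex_CInt_cont. intros t.
  apply ccont_mult; auto. apply ccont_inv. apply ccont_gz. apply gam_neq; auto.
Qed.

Lemma ex_J2 a z : (forall t, ccont a t) -> Cmod z < /2 -> is_CInt (fun t => a t * / ((gam t - z) * (gam t - z)))%C 0 T (J2 a z).
Proof.
  intros Ha Hz. apply CInt_correct. apply ex_CInt_cont. intros t.
  apply ccont_mult; auto. apply ccont_inv. apply ccont_mult; apply ccont_gz.
  apply Cmult_neq_0; apply gam_neq; auto.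
Qed.

Lemma ex_J3 a z : (forall t, ccont a t) -> Cmod z < /2 -> is_CInt (fun t => a t * / ((gam t - z) * (gam t - z) * (gam t - z)))%C 0 T (J3 a z).
Proof.
  intros Ha Hz. apply CInt_correct. apply ex_CInt_cont. intros t.
  apply ccont_mult; auto. apply ccont_inv. apply ccont_mult; [apply ccont_mult|]; apply ccont_gz.
  repeat apply Cmult_neq_0; apply gam_neq; auto.
Qed.

Lemma small_bound (X h : C) K eps : 0 <= K -> 0 < eps ->
  Cmod X <= T * (K * (Cmod h * Cmod h)) -> Cmod h < eps / (T * (K + 1)) -> Cmod X <= eps * Cmod h.
Proof.
  intros HK He HX Hh. generalize T_pos (Cmod_ge_0 h). intros HT Hh0.
  apply Rle_trans with (T * (K + 1) * Cmod h * Cmod h).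
  { eapply Rle_trans; [exact HX|]. assert (0 <= Cmod h * Cmod h) by nra. nra. }
  assert (HT1 : 0 < T * (K + 1)) by nra.
  assert (T * (K + 1) * Cmod h <= eps).
  { apply Rmult_le_reg_l with (/ (T * (K + 1))). apply Rinv_0_lt_compat; auto.
    rewrite <- Rmult_assoc, Rinv_l by lra. rewrite Rmult_1_l.
    replace (/ (T * (K + 1)) * eps) with (eps / (T * (K + 1))) by (unfold Rdiv; ring). lra. }
  nra.
Qed.

Lemma Cmod_inv_le (x : C) r : 0 < r -> r <= Cmod x -> Cmod (/ x) <= / r.
Proof.
  intros Hr Hx. rewrite Cmod_inv. apply Rinv_le_contravar; auto.
  apply Cmod_gt_0. lra.
Qed.

Lemma bound_pos (a : R -> C) M : (forall t, Cmod (a t) <= M) -> 0 <= M.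
Proof. intros H. eapply Rle_trans; [apply Cmod_ge_0|apply (H 0)]. Qed.

Lemma J1_deriv a M z : (forall t, ccont a t) -> (forall t, Cmod (a t) <= M) -> Cmod z < /2 ->
  has_cderiv (J1 a) z (J2 a z).
Proof.
  intros Ha HM Hz. assert (HM0 := bound_pos a M HM).
  rewrite cderiv_eps. intros eps Heps.
  set (d := /2 - Cmod z). assert (Hd : 0 < d) by (unfold d; lra).
  set (K := M * 2 / (d * d * d)).
  assert (HK : 0 <= K).
  { unfold K. apply Rmult_le_pos. lra. apply Rlt_le, Rinv_0_lt_compat. repeat apply Rmult_lt_0_compat; lra. }
  assert (HT := T_pos).
  exists (Rmin (d / 2) (eps / (T * (K + 1)))). split.
  { apply Rmin_pos; [lra|]. apply Rdiv_lt_0_compat; [lra|]. nra. }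
  intros w Hw.
  assert (Hw1 : Cmod (w - z) < d / 2) by (eapply Rlt_le_trans; [exact Hw|apply Rmin_l]).
  assert (Hw2 : Cmod (w - z) < eps / (T * (K + 1))) by (eapply Rlt_le_trans; [exact Hw|apply Rmin_r]).
  assert (Hwz : Cmod w < /2).
  { replace w with ((w - z) + z)%C by ring. eapply Rle_lt_trans; [apply Cmod_triangle|]. unfold d in Hw1. lra. }
  assert (HI := is_CInt_minus _ _ _ _ _ _ (is_CInt_minus _ _ _ _ _ _ (ex_J1 a w Ha Hwz) (ex_J1 a z Ha Hz))
                 (is_CInt_Cmult _ _ _ _ (w - z)%C (ex_J2 a z Ha Hz))).
  apply (is_CInt_ext _ (fun t => a t * ((w - z) * (w - z)) * / ((gam t - z) * (gam t - z) * (gam t - w)))%C) in HI.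
  2: { intros t. assert (H1 := gam_neq t z Hz). assert (H2 := gam_neq t w Hwz). field. auto. }
  rewrite Cmult_comm. apply small_bound with K; auto.
  apply Rle_trans with ((T - 0) * (K * (Cmod (w - z) * Cmod (w - z)))); [|right; ring].
  refine (is_CInt_bound _ 0 T _ _ _ _ HI); [lra|].
  intros t _. rewrite !Cmod_mult.
  assert (Hu : d <= Cmod (gam t - z)) by (apply gam_dist; auto).
  assert (Hv : d / 2 <= Cmod (gam t - w)).
  { generalize (gam_dist t w Hwz). assert (Cmod w <= Cmod (w - z) + Cmod z).
    { replace w with ((w - z) + z)%C at 1 by ring. apply Cmod_triangle. }
    unfold d in *. lra. }
  assert (Hinv : Cmod (/ ((gam t - z) * (gam t - z) * (gam t - w))) <= / (d * d * (d / 2))).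
  { apply Cmod_inv_le. apply Rmult_lt_0_compat; [nra|lra]. rewrite !Cmod_mult.
    apply Rmult_le_compat; try nra. }
  replace K with (M * / (d * d * (d / 2))) by (unfold K; field; lra).
  assert (0 <= Cmod (w - z) * Cmod (w - z)) by (apply Rmult_le_pos; apply Cmod_ge_0).
  assert (HA := HM t). generalize (Cmod_ge_0 (a t)) (Cmod_ge_0 (/ ((gam t - z) * (gam t - z) * (gam t - w)))). intros.
  assert (0 <= / (d * d * (d / 2))) by (apply Rlt_le, Rinv_0_lt_compat; apply Rmult_lt_0_compat; [nra|lra]).
  apply Rle_trans with (M * (Cmod (w - z) * Cmod (w - z)) * / (d * d * (d / 2))).
  apply Rmult_le_compat; try nra. right; ring.
Qed.

Lemma J2_deriv a M z : (forall t, ccont a t) -> (forall t, Cmod (a t) <= M) -> Cmod z < /2 ->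
  has_cderiv (J2 a) z (2 * J3 a z)%C.
Proof.
  intros Ha HM Hz. assert (HM0 := bound_pos a M HM).
  rewrite cderiv_eps. intros eps Heps.
  set (d := /2 - Cmod z). assert (Hd : 0 < d) by (unfold d; lra).
  assert (Hd1 : d <= /2) by (unfold d; generalize (Cmod_ge_0 z); lra).
  set (P := d * d * d * (d / 2) * (d / 2)).
  assert (HP : 0 < P) by (unfold P; repeat apply Rmult_lt_0_compat; lra).
  set (K := M * 4 / P).
  assert (HK : 0 <= K).
  { unfold K. apply Rmult_le_pos. lra. apply Rlt_le, Rinv_0_lt_compat. auto. }
  assert (HT := T_pos).
  exists (Rmin (d / 2) (eps / (T * (K + 1)))). split.
  { apply Rmin_pos; [lra|]. apply Rdiv_lt_0_compat; [lra|]. nra. }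
  intros w Hw.
  assert (Hw1 : Cmod (w - z) < d / 2) by (eapply Rlt_le_trans; [exact Hw|apply Rmin_l]).
  assert (Hw2 : Cmod (w - z) < eps / (T * (K + 1))) by (eapply Rlt_le_trans; [exact Hw|apply Rmin_r]).
  assert (Hwt : Cmod w <= Cmod (w - z) + Cmod z).
  { replace w with ((w - z) + z)%C at 1 by ring. apply Cmod_triangle. }
  assert (Hwz : Cmod w < /2) by (unfold d in Hw1; lra).
  assert (HI := is_CInt_minus _ _ _ _ _ _ (is_CInt_minus _ _ _ _ _ _ (ex_J2 a w Ha Hwz) (ex_J2 a z Ha Hz))
                 (is_CInt_Cmult _ _ _ _ (w - z)%C (is_CInt_Cmult _ _ _ _ 2%C (ex_J3 a z Ha Hz)))).
  apply (is_CInt_ext _ (fun t => a t * ((w - z) * (w - z)) * (3 * (gam t - z) - 2 * (w - z)) *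
     / ((gam t - z) * (gam t - z) * (gam t - z) * (gam t - w) * (gam t - w)))%C) in HI.
  2: { intros t. assert (H1 := gam_neq t z Hz). assert (H2 := gam_neq t w Hwz). field. auto. }
  rewrite Cmult_comm. apply small_bound with K; auto.
  apply Rle_trans with ((T - 0) * (K * (Cmod (w - z) * Cmod (w - z)))); [|right; ring].
  refine (is_CInt_bound _ 0 T _ _ _ _ HI); [lra|].
  intros t _. rewrite !Cmod_mult.
  assert (Hu : d <= Cmod (gam t - z)) by (apply gam_dist; auto).
  assert (Hv : d / 2 <= Cmod (gam t - w)).
  { generalize (gam_dist t w Hwz). unfold d in *. lra. }
  assert (Hinv : Cmod (/ ((gam t - z) * (gam t - z) * (gam t - z) * (gam t - w) * (gam t - w))) <= / P).
  { apply Cmod_inv_le. auto. rewrite !Cmod_mult. unfold P.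
    assert (0 < d * d) by nra. assert (0 < d * d * d) by nra. assert (0 < d * d * d * (d/2)) by nra.
    repeat (first [apply Rmult_le_compat | nra | lra]). }
  assert (H3 : Cmod (3 * (gam t - z) - 2 * (w - z))%C <= 4).
  { eapply Rle_trans; [apply Cmod_triangle|]. rewrite Cmod_opp, !Cmod_mult.
    assert (E3 : Cmod 3 = 3) by (rewrite (Cmod_R 3); apply Rabs_pos_eq; lra).
    assert (E2 : Cmod 2 = 2) by (rewrite (Cmod_R 2); apply Rabs_pos_eq; lra).
    rewrite E3, E2.
    assert (Cmod (gam t - z) <= Cmod (gam t) + Cmod z).
    { unfold Cminus. eapply Rle_trans; [apply Cmod_triangle|]. rewrite Cmod_opp. lra. }
    rewrite Cmod_gam in H. lra. }
  replace K with (M * 4 * / P) by (unfold K; field; lra).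
  assert (0 <= Cmod (w - z) * Cmod (w - z)) by (apply Rmult_le_pos; apply Cmod_ge_0).
  assert (HA := HM t). 
  generalize (Cmod_ge_0 (a t)) (Cmod_ge_0 (3 * (gam t - z) - 2 * (w - z))%C)
    (Cmod_ge_0 (/ ((gam t - z) * (gam t - z) * (gam t - z) * (gam t - w) * (gam t - w)))). intros.
  assert (0 <= / P) by (apply Rlt_le, Rinv_0_lt_compat; auto).
  apply Rle_trans with (M * (Cmod (w - z) * Cmod (w - z)) * 4 * / P); [|right; ring].
  repeat (first [apply Rmult_le_compat | apply Rmult_le_pos | apply Cmod_ge_0 | nra | lra]).
Qed.


Lemma ccont_ext (f g : R -> C) s : (forall t, f t = g t) -> ccont f s -> ccont g s.
Proof.
  rewrite !ccont_eps. intros E H eps Heps. destruct (H eps Heps) as [d [Hd H2]].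
  exists d. split; auto. intros y Hy. rewrite <- !E. auto.
Qed.

Lemma rderiv_ext (f g : R -> C) s l : (forall t, f t = g t) -> rderiv f s l -> rderiv g s l.
Proof. intros E H. apply (@is_derive_ext R_AbsRing C_R_NormedModule f g); auto. Qed.

Lemma rderiv_val (f : R -> C) s l l' : l = l' -> rderiv f s l -> rderiv f s l'.
Proof. intros E H; subst; auto. Qed.

Lemma rderiv_add_const (g : R -> C) c s l : rderiv g s l -> rderiv (fun t => c + g t)%C s l.
Proof.
  unfold rderiv. rewrite !rderiv_eps. intros H eps Heps. destruct (H eps Heps) as [d [Hd H2]].
  exists d. split; auto. intros t Ht. replace (c + g t - (c + g s) - RtoC (t - s) * l)%C with
    (g t - g s - RtoC (t - s) * l)%C by ring. auto.
Qed.

Lemma rderiv_sub_const (g : R -> C) c s l : rderiv g s l -> rderiv (fun t => g t - c)%C s l.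
Proof.
  unfold rderiv. rewrite !rderiv_eps. intros H eps Heps. destruct (H eps Heps) as [d [Hd H2]].
  exists d. split; auto. intros t Ht. replace (g t - c - (g s - c) - RtoC (t - s) * l)%C with
    (g t - g s - RtoC (t - s) * l)%C by ring. auto.
Qed.

Lemma rderiv_const (c : C) s : rderiv (fun _ => c) s (RtoC 0).
Proof.
  unfold rderiv. rewrite rderiv_eps. intros eps Heps. exists 1. split; [lra|]. intros t _.
  replace (c - c - RtoC (t - s) * RtoC 0)%C with (RtoC 0) by ring. rewrite Cmod_0.
  generalize (Rabs_pos (t - s)). nra.
Qed.

Lemma jcont_mult (F G : R -> R -> C) s0 t0 : jcont F s0 t0 -> jcont G s0 t0 -> jcont (fun s t => F s t * G s t)%C s0 t0.
Proof.
  intros H1 H2 eps Heps.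
  set (e := Rmin 1 (eps / (Cmod (G s0 t0) + Cmod (F s0 t0) + 2))).
  assert (He : 0 < e).
  { apply Rmin_pos; [lra|apply Rdiv_lt_0_compat; [lra|generalize (Cmod_ge_0 (F s0 t0)) (Cmod_ge_0 (G s0 t0)); lra]]. }
  destruct (H1 e He) as [d1 [Hd1 H1']]. destruct (H2 e He) as [d2 [Hd2 H2']].
  exists (Rmin d1 d2). split; [apply Rmin_pos; auto|]. intros s t Hs Ht.
  apply mult_close; auto.
  apply H1'; (eapply Rlt_le_trans; [eassumption|apply Rmin_l]).
  apply H2'; (eapply Rlt_le_trans; [eassumption|apply Rmin_r]).
Qed.

Lemma jcont_plus (F G : R -> R -> C) s0 t0 : jcont F s0 t0 -> jcont G s0 t0 -> jcont (fun s t => F s t + G s t)%C s0 t0.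
Proof.
  intros H1 H2 eps Heps.
  destruct (H1 (eps/2)) as [d1 [Hd1 H1']]; [lra|]. destruct (H2 (eps/2)) as [d2 [Hd2 H2']]; [lra|].
  exists (Rmin d1 d2). split; [apply Rmin_pos; auto|]. intros s t Hs Ht.
  replace (F s t + G s t - (F s0 t0 + G s0 t0))%C with ((F s t - F s0 t0) + (G s t - G s0 t0))%C by ring.
  eapply Rle_lt_trans; [apply Cmod_triangle|].
  assert (Cmod (F s t - F s0 t0) < eps/2) by (apply H1'; (eapply Rlt_le_trans; [eassumption|apply Rmin_l])).
  assert (Cmod (G s t - G s0 t0) < eps/2) by (apply H2'; (eapply Rlt_le_trans; [eassumption|apply Rmin_r])).
  lra.
Qed.

Lemma jcont_comp (h : C -> C) (F : R -> R -> C) s0 t0 : jcont F s0 t0 -> ccontC h (F s0 t0) ->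
  jcont (fun s t => h (F s t)) s0 t0.
Proof.
  intros H1 H2 eps Heps. destruct (cont_CC_eps h _ H2 eps Heps) as [d [Hd H2']].
  destruct (H1 d Hd) as [d' [Hd' H1']]. exists d'. split; auto.
Qed.

Lemma jcont_t (g : R -> C) s0 t0 : ccont g t0 -> jcont (fun _ t => g t) s0 t0.
Proof.
  rewrite ccont_eps. intros H eps Heps. destruct (H eps Heps) as [d [Hd H2]].
  exists d. split; auto.
Qed.

Lemma jcont_s s0 t0 : jcont (fun s _ => RtoC s) s0 t0.
Proof.
  intros eps Heps. exists eps. split; auto. intros s t Hs _.
  rewrite <- RtoC_minus, Cmod_R. auto.
Qed.

Lemma jcont_const (c : C) s0 t0 : jcont (fun _ _ => c) s0 t0.
Proof.
  intros eps Heps. exists 1. split; [lra|]. intros. replace (c - c)%C with (RtoC 0) by ring.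
  rewrite Cmod_0. auto.
Qed.

Lemma ccont_gam_mult (c : C) t : ccont (fun t => c * gam t)%C t.
Proof. apply ccont_mult. apply ccont_const. apply gam_cont. Qed.

Lemma Ci_sq : (Ci * Ci = - (1))%C.
Proof. unfold Ci, Cmult, Copp; simpl. f_equal; ring. Qed.

Lemma is_CInt_one a b : is_CInt (fun _ => RtoC 1) a b (RtoC (b - a)).
Proof.
  unfold is_CInt.
  assert (H := @is_RInt_const C_R_NormedModule a b (RtoC 1)).
  revert H. match goal with |- is_RInt _ _ _ ?x -> _ => replace x with (RtoC (b - a)) end; auto.
  rewrite scal_R_Cmult. ring.
Qed.

Lemma int_gam0 : is_CInt gam 0 T (RtoC 0).
Proof.
  replace (RtoC 0) with ((- Ci) * gam T - (- Ci) * gam 0)%C.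
  2: { unfold T. rewrite gam_per. ring. }
  apply (is_CInt_FTC (fun t => - Ci * gam t)%C). generalize T_pos; lra.
  - intros t _. apply rderiv_val with (- Ci * (Ci * gam t))%C.
    + replace (- Ci * (Ci * gam t))%C with (- (Ci * Ci) * gam t)%C by ring. rewrite Ci_sq. ring.
    + apply rderiv_cmult. apply gam_deriv.
  - intros t _. apply gam_cont.
Qed.

Lemma J2_gam_zero z : Cmod z < /2 -> J2 gam z = RtoC 0.
Proof.
  intros Hz. apply CInt_unique.
  replace (RtoC 0) with (Ci * / (gam T - z) - Ci * / (gam 0 - z))%C.
  2: { unfold T. rewrite gam_per. ring. }
  apply (is_CInt_FTC (fun t => Ci * / (gam t - z))%C). generalize T_pos; lra.
  - intros t _. apply rderiv_val with (Ci * (- / ((gam t - z) * (gam t - z)) * (Ci * gam t)))%C.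
    + replace (Ci * (- / ((gam t - z) * (gam t - z)) * (Ci * gam t)))%C with
        (- (Ci * Ci) * (gam t * / ((gam t - z) * (gam t - z))))%C by ring.
      rewrite Ci_sq. ring.
    + apply rderiv_cmult. apply (rderiv_chain Cinv (fun t => gam t - z)%C).
      * apply rderiv_sub_const. apply gam_deriv.
      * apply cinv_deriv. apply gam_neq; auto.
  - intros t _. apply ccont_mult. apply gam_cont. apply ccont_inv.
    apply ccont_mult; apply ccont_gz. apply Cmult_neq_0; apply gam_neq; auto.
Qed.

Lemma W_const z : Cmod z < /2 -> J1 gam z = RtoC T.
Proof.
  intros Hz.
  assert (Hq : forall s, 0 <= s <= 1 -> Cmod (0 + RtoC s * z)%C < /2).
  { intros s Hs. rewrite Cplus_0_l, Cmod_mult, Cmod_R, Rabs_pos_eq by lra.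
    generalize (Cmod_ge_0 z). nra. }
  assert (HI : is_CInt (fun _ => RtoC 0) 0 1 (J1 gam (0 + RtoC 1 * z) - J1 gam (0 + RtoC 0 * z))%C).
  { apply (is_CInt_FTC (fun s => J1 gam (0 + RtoC s * z))%C). lra.
    - intros s Hs. apply rderiv_val with (J2 gam (0 + RtoC s * z) * z)%C.
      + rewrite J2_gam_zero by auto. ring.
      + apply (rderiv_chain (J1 gam) (fun s => 0 + RtoC s * z)%C).
        * apply rderiv_affine.
        * apply J1_deriv with (/2). apply gam_cont. intros t. rewrite Cmod_gam. lra. auto.
    - intros; apply ccont_const. }
  assert (E := is_CInt_uniq _ _ _ _ _ HI (is_CInt_zero 0 1)).
  replace (0 + RtoC 1 * z)%C with z in E by ring.
  replace (0 + RtoC 0 * z)%C with (RtoC 0) in E by ring.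
  assert (E0 : J1 gam (RtoC 0) = RtoC T).
  { apply CInt_unique. replace (RtoC T) with (RtoC (T - 0)) by (f_equal; ring).
    eapply is_CInt_ext; [|apply is_CInt_one]. intros t. simpl.
    assert (H := gam_neq0 t). field. replace (gam t - 0)%C with (gam t) by ring. auto. }
  rewrite <- E0. apply (f_equal (fun x => x + J1 gam 0))%C in E.
  replace (J1 gam z - J1 gam 0 + J1 gam 0)%C with (J1 gam z) in E by ring.
  rewrite E. ring.
Qed.

Lemma CInt_ext (f g : R -> C) a b : (forall t, f t = g t) -> CInt f a b = CInt g a b.
Proof. intros E. apply (@RInt_ext C_R_CompleteNormedModule). intros; auto. Qed.

Lemma p_in_disk z s t : Cmod z < /3 -> -1/10 < s < 11/10 -> Cmod (z + RtoC s * (gam t - z))%C < 1.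
Proof.
  intros Hz Hs.
  replace (z + RtoC s * (gam t - z))%C with (RtoC (1 - s) * z + RtoC s * gam t)%C
    by (rewrite RtoC_minus; ring).
  eapply Rle_lt_trans; [apply Cmod_triangle|]. rewrite !Cmod_mult, !Cmod_R, Cmod_gam.
  assert (Rabs (1 - s) <= 11/10) by (apply Rabs_le; lra).
  assert (Rabs s <= 11/10) by (apply Rabs_le; lra).
  generalize (Cmod_ge_0 z) (Rabs_pos (1 - s)) (Rabs_pos s). intros.
  assert (Rabs (1 - s) * Cmod z <= 11/10 * /3) by (apply Rmult_le_compat; lra).
  lra.
Qed.

Lemma cauchy (f f1 : C -> C) z : (forall w, Cmod w < 1 -> has_cderiv f w (f1 w)) ->
  (forall w, Cmod w < 1 -> ccontC f1 w) -> Cmod z < /3 ->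
  J1 (fun t => f (gam t) * gam t)%C z = (RtoC T * f z)%C.
Proof.
  intros Hf Hc Hz.
  assert (Hz2 : Cmod z < /2) by lra.
  set (p := fun s t => (z + RtoC s * (gam t - z))%C).
  set (k := fun t => (gam t * / (gam t - z))%C).
  set (F := fun s t => (k t * f (p s t))%C).
  set (D := fun s t => (f1 (p s t) * gam t)%C).
  assert (HT := T_pos).
  assert (Hk : forall t, ccont k t).
  { intros t. unfold k. apply ccont_mult. apply gam_cont. apply ccont_inv. apply ccont_gz. apply gam_neq; auto. }
  assert (Hpc : forall s t, ccont (p s) t).
  { intros s t. unfold p. apply ccont_plus. apply ccont_const. apply ccont_mult. apply ccont_const. apply ccont_gz. }
  assert (HA : forall s, 0 <= s <= 1 -> rderiv (fun s => CInt (F s) 0 T) s (CInt (D s) 0 T)).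
  { intros s Hs. apply (param_deriv F D 0 T s (1/10)). lra.
    - intros s' t Hs'. assert (Hs'' : -1/10 < s' < 11/10) by (apply Rabs_def2 in Hs'; lra).
      apply rderiv_val with (k t * (f1 (p s' t) * (gam t - z)))%C.
      + unfold k, D. assert (H := gam_neq t z Hz2). field. auto.
      + unfold F. apply rderiv_cmult. apply (rderiv_chain f (fun u => z + RtoC u * (gam t - z))%C).
        * apply rderiv_affine.
        * apply Hf. apply p_in_disk; auto.
    - intros t. unfold D. apply jcont_mult; [|apply jcont_t; apply gam_cont].
      apply (jcont_comp f1 p). 
      + unfold p. apply jcont_plus. apply jcont_const. apply jcont_mult. apply jcont_s.
        apply jcont_t. apply ccont_gz.
      + apply Hc. apply p_in_disk; auto. lra.
    - intros s' t Hs'. assert (Hs'' : -1/10 < s' < 11/10) by (apply Rabs_def2 in Hs'; lra).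
      unfold F. apply ccont_mult. apply Hk. apply (ccont_comp (p s') f). apply Hpc.
      eapply cderiv_cont. apply Hf. apply p_in_disk; auto. }
  assert (HB : forall s, 0 <= s <= 1 -> CInt (D s) 0 T = RtoC 0).
  { intros s Hs. destruct (Req_dec s 0) as [Hs0|Hs0].
    - subst s. apply CInt_unique. replace (RtoC 0) with (f1 z * RtoC 0)%C by ring.
      eapply is_CInt_ext; [|apply is_CInt_Cmult; apply int_gam0].
      intros t. unfold D, p. replace (z + RtoC 0 * (gam t - z))%C with z by ring. reflexivity.
    - apply CInt_unique.
      assert (HI : is_CInt (fun t => f1 (p s t) * (RtoC s * (Ci * gam t)))%C 0 T (f (p s T) - f (p s 0))%C).
      { apply (is_CInt_FTC (fun t => f (p s t))). lra.
        - intros t _. apply (rderiv_chain f (p s)).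
          + unfold p. apply rderiv_add_const. apply rderiv_cmult. apply rderiv_sub_const. apply gam_deriv.
          + apply Hf. apply p_in_disk; auto. lra.
        - intros t _. apply ccont_mult. apply (ccont_comp (p s) f1). apply Hpc. apply Hc. apply p_in_disk; auto. lra.
          apply ccont_mult. apply ccont_const. apply ccont_gam_mult. }
      assert (E : p s T = p s 0) by (unfold p, T; rewrite gam_per; reflexivity).
      rewrite E in HI. replace (f (p s 0) - f (p s 0))%C with (RtoC 0) in HI by ring.
      apply (is_CInt_Cmult _ _ _ _ (/ (RtoC s * Ci))%C) in HI.
      replace (/ (RtoC s * Ci) * RtoC 0)%C with (RtoC 0) in HI by ring.
      eapply is_CInt_ext; [|exact HI]. intros t. unfold D.
      assert (Hs1 : RtoC s <> 0%C) by (intros H; apply Hs0; apply (f_equal Re) in H; simpl in H; auto).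
      field. split; auto. apply Ci_nz. }
  assert (HC : is_CInt (fun _ => RtoC 0) 0 1 (CInt (F 1) 0 T - CInt (F 0) 0 T)%C).
  { apply (is_CInt_FTC (fun s => CInt (F s) 0 T)). lra.
    - intros s Hs. rewrite <- (HB s Hs). apply HA; auto.
    - intros; apply ccont_const. }
  assert (E := is_CInt_uniq _ _ _ _ _ HC (is_CInt_zero 0 1)).
  assert (E1 : CInt (F 1) 0 T = J1 (fun t => f (gam t) * gam t)%C z).
  { apply CInt_ext. intros t. unfold F, p, k.
    replace (z + RtoC 1 * (gam t - z))%C with (gam t) by ring. ring. }
  assert (E0 : CInt (F 0) 0 T = (f z * J1 gam z)%C).
  { unfold J1. rewrite <- CInt_Cmult.
    - apply CInt_ext. intros t. unfold F, p, k.
      replace (z + RtoC 0 * (gam t - z))%C with z by ring. ring.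
    - eexists. apply (ex_J1 gam z gam_cont Hz2). }
  rewrite W_const in E0 by auto.
  rewrite <- E1. apply (f_equal (fun x => x + CInt (F 0) 0 T))%C in E.
  replace (CInt (F 1) 0 T - CInt (F 0) 0 T + CInt (F 0) 0 T)%C with (CInt (F 1) 0 T) in E by ring.
  rewrite E, E0. ring.
Qed.


Lemma rderiv_ccont (h : R -> C) s l : rderiv h s l -> continuity_pt (fun t => Re (h t)) s.
Proof.
  intros H. apply continuity_pt_filterlim. apply (@ex_derive_continuous R_AbsRing R_NormedModule).
  eexists. apply rderiv_Re. exact H.
Qed.

Lemma mvt_C (psi dpsi : R -> C) (m dm : R -> R) :
  (forall t, 0 <= t <= 1 -> rderiv psi t (dpsi t)) ->
  (forall t, 0 <= t <= 1 -> is_derive m t (dm t)) ->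
  (forall t, 0 <= t <= 1 -> Cmod (dpsi t) <= dm t) ->
  Cmod (psi 1 - psi 0)%C <= m 1 - m 0.
Proof.
  intros Hp Hm Hb.
  destruct (Ceq_dec (psi 1 - psi 0)%C 0) as [E|E].
  - rewrite E, Cmod_0.
    destruct (MVT_gen m 0 1 dm) as [c [Hc Hc2]].
    + intros x Hx. rewrite Rmin_left, Rmax_right in Hx by lra. apply Hm; lra.
    + intros x Hx. rewrite Rmin_left, Rmax_right in Hx by lra.
      apply continuity_pt_filterlim. apply (@ex_derive_continuous R_AbsRing R_NormedModule).
      eexists; apply Hm; auto.
    + rewrite Rmin_left, Rmax_right in Hc by lra. rewrite Hc2.
      assert (H := Hb c Hc). generalize (Cmod_ge_0 (dpsi c)). nra.
  - set (Dl := (psi 1 - psi 0)%C) in *.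
    assert (HD : 0 < Cmod Dl) by (apply Cmod_gt_0; auto).
    set (u := (Cconj Dl * / RtoC (Cmod Dl))%C).
    assert (Hu : Cmod u = 1).
    { unfold u. rewrite Cmod_mult, Cmod_conj, Cmod_inv, Cmod_R, Rabs_pos_eq by (try lra; intro H; apply RtoC_inj in H; lra).
      field. lra. }
    assert (HuD : (u * Dl)%C = RtoC (Cmod Dl)).
    { unfold u. assert (RtoC (Cmod Dl) <> 0%C) by (intro H; apply RtoC_inj in H; lra).
      assert (E2 := Cmod2_conj Dl). 
      replace (Cconj Dl * / RtoC (Cmod Dl) * Dl)%C with ((Dl * Cconj Dl) * / RtoC (Cmod Dl))%C by ring.
      rewrite <- E2. rewrite RtoC_pow. field. auto. }
    set (q := fun t => Re (u * psi t)%C - m t).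
    destruct (MVT_gen q 0 1 (fun t => Re (u * dpsi t)%C - dm t)) as [c [Hc Hc2]].
    + intros x Hx. rewrite Rmin_left, Rmax_right in Hx by lra. unfold q.
      apply (@is_derive_minus R_AbsRing R_NormedModule). apply rderiv_Re. apply rderiv_cmult. apply Hp; lra.
      apply Hm; lra.
    + intros x Hx. rewrite Rmin_left, Rmax_right in Hx by lra. unfold q.
      apply continuity_pt_minus.
      * apply (rderiv_ccont (fun t => u * psi t)%C x (u * dpsi x)%C). apply rderiv_cmult. apply Hp; lra.
      * apply continuity_pt_filterlim. apply (@ex_derive_continuous R_AbsRing R_NormedModule).
        eexists; apply Hm; auto.
    + rewrite Rmin_left, Rmax_right in Hc by lra.
      unfold q in Hc2.
      assert (E1 : Re (u * psi 1)%C - Re (u * psi 0)%C = Cmod Dl).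
      { rewrite <- (re_RtoC (Cmod Dl)), <- HuD. unfold Dl. destruct u, (psi 1), (psi 0). unfold Re; simpl. ring. }
      assert (E3 : Re (u * dpsi c)%C <= dm c).
      { eapply Rle_trans; [|apply (Hb c Hc)]. eapply Rle_trans; [apply Rle_abs|].
        eapply Rle_trans; [apply re_le_Cmod|]. rewrite Cmod_mult, Hu. lra. }
      nra.
Qed.

Lemma cderiv_val (f : C -> C) z l l' : l = l' -> has_cderiv f z l -> has_cderiv f z l'.
Proof. intros E H; subst; auto. Qed.

Lemma cderiv_ext (f g : C -> C) z l : (forall w, f w = g w) -> has_cderiv f z l -> has_cderiv g z l.
Proof. intros E H. apply (@is_derive_ext C_AbsRing C_NormedModule f g); auto. Qed.

Lemma cderiv_abs (f : C -> C) z l : has_cderiv f z l <-> @is_derive C_AbsRing (AbsRing_NormedModule C_AbsRing) f z l.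
Proof.
  unfold has_cderiv. rewrite !derive_eps. split; intros H eps; destruct (H eps) as [d Hd]; exists d; exact Hd.
Qed.

Lemma cderiv_g (f f1 : C -> C) z d1 d : has_cderiv f z d -> has_cderiv f1 z d1 ->
  has_cderiv (fun w => w * f1 w - f w)%C z (z * d1 + f1 z - d)%C.
Proof.
  intros Hf Hf1.
  rewrite cderiv_abs in Hf, Hf1.
  assert (H := @is_derive_minus C_AbsRing _ _ _ z _ _
    (@is_derive_mult C_AbsRing (fun w => w) f1 z _ _ (@is_derive_id C_AbsRing z) Hf1 Cmult_comm) Hf).
  rewrite <- cderiv_abs in H.
  eapply cderiv_ext; [|eapply cderiv_val; [|exact H]].
  - intros w. reflexivity.
  - change (one * f1 z + z * d1 - d = z * d1 + f1 z - d)%C. 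
    match goal with |- context [Cmult ?o (f1 z)] => replace o with (RtoC 1) by reflexivity end. ring.
Qed.

Lemma lip_bound (h h' : C -> C) M w : (forall v, Cmod v < 1 -> has_cderiv h v (h' v)) ->
  (forall v, Cmod v < 1 -> Cmod (h' v) <= M) -> Cmod w < 1 -> Cmod (h w - h 0) <= M * Cmod w.
Proof.
  intros Hh HM Hw.
  assert (Hq : forall t, 0 <= t <= 1 -> Cmod (0 + RtoC t * w)%C < 1).
  { intros t Ht. rewrite Cplus_0_l, Cmod_mult, Cmod_R, Rabs_pos_eq by lra.
    generalize (Cmod_ge_0 w). nra. }
  assert (H := mvt_C (fun t => h (0 + RtoC t * w)%C) (fun t => h' (0 + RtoC t * w)%C * w)%C
     (fun t => M * Cmod w * t) (fun _ => M * Cmod w)).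
  cbv beta in H. replace (0 + RtoC 1 * w)%C with w in H by ring. replace (0 + RtoC 0 * w)%C with (RtoC 0) in H by ring.
  replace (M * Cmod w) with (M * Cmod w * 1 - M * Cmod w * 0) by ring. apply H.
  - intros t Ht. apply (rderiv_chain h (fun t => 0 + RtoC t * w)%C). apply rderiv_affine. apply Hh; auto.
  - intros t _. auto_derive; auto. ring.
  - intros t Ht. rewrite Cmod_mult. apply Rmult_le_compat_r. apply Cmod_ge_0. apply HM; auto.
Qed.

Lemma g_bound (f f1 f2 : C -> C) lam w :
  (forall z, unit_disk z -> has_cderiv f z (f1 z)) ->
  (forall z, unit_disk z -> has_cderiv f1 z (f2 z)) ->
  f (RtoC 0) = RtoC 0 -> (forall z, unit_disk z -> Cmod (f2 z) <= 2 * lam) -> Cmod w < 1 ->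
  Cmod (w * f1 w - f w)%C <= lam * (Cmod w * Cmod w).
Proof.
  intros Hf Hf1 H0 Hb Hw.
  assert (Hq : forall t, 0 <= t <= 1 -> Cmod (0 + RtoC t * w)%C < 1).
  { intros t Ht. rewrite Cplus_0_l, Cmod_mult, Cmod_R, Rabs_pos_eq by lra.
    generalize (Cmod_ge_0 w). nra. }
  set (g := fun v => (v * f1 v - f v)%C).
  assert (H := mvt_C (fun t => g (0 + RtoC t * w)%C) (fun t => (0 + RtoC t * w) * f2 (0 + RtoC t * w) * w)%C
     (fun t => lam * (Cmod w * Cmod w) * (t * t)) (fun t => lam * (Cmod w * Cmod w) * (2 * t))).
  cbv beta in H. replace (0 + RtoC 1 * w)%C with w in H by ring. replace (0 + RtoC 0 * w)%C with (RtoC 0) in H by ring.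
  assert (Hg0 : g (RtoC 0) = RtoC 0) by (unfold g; rewrite H0; ring).
  rewrite Hg0 in H. replace (w * f1 w - f w)%C with (g w) by reflexivity.
  replace (g w) with (g w - RtoC 0)%C by ring.
  replace (lam * (Cmod w * Cmod w)) with (lam * (Cmod w * Cmod w) * (1 * 1) - lam * (Cmod w * Cmod w) * (0 * 0)) by ring.
  apply H.
  - intros t Ht. apply (rderiv_chain g (fun t => 0 + RtoC t * w)%C). apply rderiv_affine.
    eapply cderiv_val; [|apply cderiv_g; [apply Hf|apply Hf1]; apply Hq; auto]. ring.
  - intros t _. auto_derive; auto. ring.
  - intros t Ht. rewrite !Cmod_mult. rewrite Cplus_0_l, Cmod_mult, Cmod_R, Rabs_pos_eq by lra.
    assert (Cmod (f2 (RtoC t * w)%C) <= 2 * lam).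
    { apply Hb. unfold unit_disk. rewrite <- (Cplus_0_l (RtoC t * w)). apply Hq; auto. }
    generalize (Cmod_ge_0 w) (Cmod_ge_0 (f2 (RtoC t * w)%C)). intros.
    assert (0 <= t * Cmod w) by nra.
    apply Rle_trans with (t * Cmod w * (2 * lam) * Cmod w).
    apply Rmult_le_compat_r; auto. apply Rmult_le_compat_l; auto. right; ring.
Qed.


Lemma cderiv_mult (p q : C -> C) z lp lq : has_cderiv p z lp -> has_cderiv q z lq ->
  has_cderiv (fun w => p w * q w)%C z (lp * q z + p z * lq)%C.
Proof.
  intros Hp Hq. rewrite cderiv_abs in *.
  exact (@is_derive_mult C_AbsRing p q z _ _ Hp Hq Cmult_comm).
Qed.

Lemma cderiv_comp (h q : C -> C) z lh lq : has_cderiv h (q z) lh -> has_cderiv q z lq ->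
  has_cderiv (fun w => h (q w)) z (lq * lh)%C.
Proof.
  intros Hh Hq. rewrite cderiv_abs in Hq.
  exact (@is_derive_comp C_AbsRing C_NormedModule h q z _ _ Hh Hq).
Qed.

Lemma cderiv_const (c : C) z : has_cderiv (fun _ => c) z (RtoC 0).
Proof. apply (@is_derive_const C_AbsRing C_NormedModule c z). Qed.

Lemma cderiv_id z : has_cderiv (fun w => w) z (RtoC 1).
Proof. rewrite cderiv_abs. apply (@is_derive_id C_AbsRing z). Qed.

Lemma cderiv_mulc (h : C -> C) c z l : has_cderiv h z l -> has_cderiv (fun w => h w * c)%C z (l * c)%C.
Proof.
  intros H. eapply cderiv_val; [|apply (cderiv_mult h (fun _ => c)); [exact H|apply cderiv_const]].
  ring.
Qed.

Lemma cderiv_unique (f : C -> C) z l1 l2 : has_cderiv f z l1 -> has_cderiv f z l2 -> l1 = l2.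
Proof.
  intros H1 H2. rewrite <- (is_C_derive_unique f z l1 H1). apply is_C_derive_unique. auto.
Qed.

Lemma cderiv_loc (f g : C -> C) z l r : 0 < r -> (forall w, Cmod (w - z) < r -> f w = g w) ->
  has_cderiv f z l -> has_cderiv g z l.
Proof.
  intros Hr E H. apply (@is_derive_ext_loc C_AbsRing C_NormedModule f g z l); auto.
  exists (mkposreal r Hr). intros w Hw. apply E. exact Hw.
Qed.

Lemma Cmod_lt_tri (w z : C) r1 r2 : Cmod z < r1 -> Cmod (w - z) < r2 -> Cmod w < r1 + r2.
Proof.
  intros H1 H2. replace w with ((w - z) + z)%C by ring.
  eapply Rle_lt_trans; [apply Cmod_triangle|]. lra.
Qed.

Lemma RtoC_neq (x : R) : x <> 0 -> RtoC x <> 0%C.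
Proof. intros H E. apply H. apply (f_equal Re) in E. simpl in E. auto. Qed.

Lemma part1 (lam : R) : 0 < lam ->
  forall f f1 f2 : C -> C,
     (forall z, unit_disk z -> has_cderiv f z (f1 z)) ->
     (forall z, unit_disk z -> has_cderiv f1 z (f2 z)) ->
     f (RtoC 0) = RtoC 0 -> f1 (RtoC 0) = RtoC 1 ->
     (forall z, unit_disk z -> Cmod (f2 z) <= 2 * lam) ->
     Omega lam f.
Proof.
  intros Hlam f f1 f2 Hf Hf1 H0 H1 Hb.
  assert (Hc : forall w, Cmod w < 1 -> ccontC f1 w) by (intros w Hw; eapply cderiv_cont; apply Hf1; exact Hw).
  set (M := 1 + 2 * lam).
  assert (Hb1 : forall w, Cmod w < 1 -> Cmod (f1 w) <= M).
  { intros w Hw. assert (H := lip_bound f1 f2 (2 * lam) w Hf1 Hb Hw). rewrite H1 in H.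
    replace (f1 w) with ((f1 w - 1) + 1)%C by ring. eapply Rle_trans; [apply Cmod_triangle|].
    rewrite Cmod_1. unfold M. generalize (Cmod_ge_0 w). nra. }
  assert (Hb0 : forall w, Cmod w < 1 -> Cmod (f w) <= M).
  { intros w Hw. assert (H := lip_bound f f1 M w Hf Hb1 Hw). rewrite H0 in H.
    replace (f w) with (f w - 0)%C by ring. unfold M in *. generalize (Cmod_ge_0 w). nra. }
  assert (Hg1 : forall t, Cmod (gam t) < 1) by (intros t; rewrite Cmod_gam; lra).
  set (a0 := fun t => f (gam t)). set (a1 := fun t => (f (gam t) * gam t)%C).
  assert (Ha0 : forall t, ccont a0 t).
  { intros t. apply (ccont_comp gam f). apply gam_cont. eapply cderiv_cont. apply Hf. apply Hg1. }
  assert (Ha1 : forall t, ccont a1 t).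
  { intros t. apply ccont_mult. apply Ha0. apply gam_cont. }
  assert (Hm0 : forall t, Cmod (a0 t) <= M) by (intros t; apply Hb0; apply Hg1).
  assert (Hm1 : forall t, Cmod (a1 t) <= M).
  { intros t. unfold a1. rewrite Cmod_mult, Cmod_gam. assert (H := Hb0 _ (Hg1 t)).
    generalize (Cmod_ge_0 (f (gam t))). lra. }
  assert (HT := T_pos). assert (HTn : RtoC T <> 0%C) by (apply RtoC_neq; lra).
  assert (HC : forall w, Cmod w < /3 -> J1 a1 w = (RtoC T * f w)%C).
  { intros w Hw. apply cauchy with f1; auto. }
  assert (HF1 : forall z, Cmod z < /4 -> f1 z = (J2 a1 z * / RtoC T)%C).
  { intros z Hz. apply (cderiv_unique f z); [apply Hf; unfold unit_disk; lra|].
    apply (cderiv_loc (fun w => J1 a1 w * / RtoC T)%C f z _ (/12)). lra.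
    - intros w Hw. assert (Hw3 : Cmod w < /3) by (apply (Cmod_lt_tri w z (/4) (/12)) in Hw; auto; lra).
      rewrite HC by auto. field. auto.
    - apply cderiv_mulc. apply J1_deriv with M; auto. lra. }
  assert (HJ0 : J1 a1 (RtoC 0) = RtoC 0).
  { rewrite HC. rewrite H0. ring. rewrite Cmod_0. lra. }
  set (K := fun z => (J2 a0 z * / RtoC T)%C).
  assert (HA : forall z, Cmod z < /4 -> (z * f1 z - f z)%C = (z * z * K z)%C).
  { intros z Hz. assert (Hz2 : Cmod z < /2) by lra.
    assert (HI := is_CInt_plus _ _ _ _ _ _ (is_CInt_minus _ _ _ _ _ _ (is_CInt_Cmult _ _ _ _ z (ex_J2 a1 z Ha1 Hz2))
                    (ex_J1 a1 z Ha1 Hz2)) (ex_J1 a1 (RtoC 0) Ha1 ltac:(rewrite Cmod_0; lra))).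
    apply (is_CInt_ext _ (fun t => (z * z) * (a0 t * / ((gam t - z) * (gam t - z))))%C) in HI.
    2: { intros t. unfold a1, a0. assert (E1 := gam_neq t z Hz2). assert (E2 := gam_neq0 t).
         replace (gam t - 0)%C with (gam t) by ring. field. auto. }
    assert (E := is_CInt_uniq _ _ _ _ _ HI (is_CInt_Cmult _ _ _ _ (z * z)%C (ex_J2 a0 z Ha0 Hz2))).
    rewrite HJ0 in E. rewrite HF1 by auto.
    replace (f z) with (J1 a1 z * / RtoC T)%C by (rewrite HC by lra; field; auto).
    unfold K. apply (f_equal (fun x => x * / RtoC T)%C) in E.
    replace (z * (J2 a1 z * / RtoC T) - J1 a1 z * / RtoC T)%C with
      ((z * J2 a1 z - J1 a1 z + 0) * / RtoC T)%C by ring.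
    rewrite E. ring. }
  assert (HKd : has_cderiv K (RtoC 0) (2 * J3 a0 (RtoC 0) * / RtoC T)%C).
  { apply cderiv_mulc. apply J2_deriv with M; auto. rewrite Cmod_0; lra. }
  assert (HKb : forall z : C, z <> 0%C -> Cmod z < /4 -> Cmod (K z) <= lam).
  { intros z Hz0 Hz. assert (Hm : 0 < Cmod z) by (apply (proj1 (Cmod_gt_0 z)); assumption).
    assert (H := g_bound f f1 f2 lam z Hf Hf1 H0 Hb ltac:(lra)).
    rewrite HA, !Cmod_mult in H by auto.
    apply Rmult_le_reg_l with (Cmod z * Cmod z). nra. nra. }
  assert (HK0 : Cmod (K (RtoC 0)) <= lam).
  { destruct (Rle_dec (Cmod (K (RtoC 0))) lam) as [Hl|Hl]; auto. exfalso.
    assert (Hl' : 0 < Cmod (K (RtoC 0)) - lam) by lra.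
    destruct (cont_CC_eps K _ (cderiv_cont _ _ _ HKd) _ Hl') as [d [Hd Hd2]].
    set (r := Rmin d (/4) / 2).
    assert (Hr : 0 < r) by (unfold r; generalize (Rmin_pos d (/4) Hd ltac:(lra)); lra).
    assert (Hr1 : r < d) by (unfold r; generalize (Rmin_l d (/4)) (Rmin_pos d (/4) Hd ltac:(lra)); lra).
    assert (Hr2 : r < /4) by (unfold r; generalize (Rmin_r d (/4)) (Rmin_pos d (/4) Hd ltac:(lra)); lra).
    assert (Hrc : Cmod (RtoC r) = r) by (rewrite Cmod_R; apply Rabs_pos_eq; lra).
    specialize (Hd2 (RtoC r)). replace (RtoC r - RtoC 0)%C with (RtoC r) in Hd2 by ring.
    specialize (Hd2 ltac:(lra)).
    assert (H := HKb (RtoC r) (RtoC_neq r ltac:(lra)) ltac:(lra)).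
    generalize (Cmod_rev (K (RtoC 0)) (K (RtoC r))). rewrite Cmod_sub_sym. lra. }
  set (phi := fun w => if Ceq_dec w 0 then (K (RtoC 0) * / RtoC lam)%C
                       else ((w * f1 w - f w) * / (RtoC lam * (w * w)))%C).
  assert (Hln : RtoC lam <> 0%C) by (apply RtoC_neq; lra).
  exists f1. split; [exact Hf|]. split; [exact H0|]. split; [exact H1|].
  exists phi. split; [|split].
  - intros z Hz. unfold unit_disk in Hz. destruct (Ceq_dec z 0) as [Ez|Ez].
    + subst z. eexists. apply (cderiv_loc (fun w => K w * / RtoC lam)%C phi _ _ (/4)). lra.
      * intros w Hw. replace (w - 0)%C with w in Hw by ring. unfold phi.
        destruct (Ceq_dec w 0) as [Ew|Ew]. subst; reflexivity.
        rewrite HA by auto. field. auto.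
      * apply cderiv_mulc. exact HKd.
    + assert (Hm : 0 < Cmod z) by (apply (proj1 (Cmod_gt_0 z)); assumption).
      eexists. apply (cderiv_loc (fun w => (w * f1 w - f w) * / (RtoC lam * (w * w)))%C phi _ _ (Cmod z)). auto.
      * intros w Hw. unfold phi. destruct (Ceq_dec w 0) as [Ew|Ew]; auto.
        subst w. replace (0 - z)%C with (- z)%C in Hw by ring. rewrite Cmod_opp in Hw. lra.
      * apply cderiv_mult. apply cderiv_g; [apply Hf|apply Hf1]; auto.
        apply (cderiv_comp Cinv (fun w => RtoC lam * (w * w))%C).
        -- apply cinv_deriv. apply Cmult_neq_0; auto. apply Cmult_neq_0; auto.
        -- apply cderiv_mult. apply cderiv_const. apply cderiv_mult; apply cderiv_id.
  - intros z Hz. unfold unit_disk in Hz. unfold phi. destruct (Ceq_dec z 0) as [Ez|Ez].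
    + rewrite Cmod_mult, Cmod_inv, Cmod_R, Rabs_pos_eq by (auto; lra).
      apply Rmult_le_reg_r with lam; auto. field_simplify; lra.
    + assert (Hm : 0 < Cmod z) by (apply (proj1 (Cmod_gt_0 z)); assumption).
      assert (H := g_bound f f1 f2 lam z Hf Hf1 H0 Hb Hz).
      rewrite Cmod_mult, Cmod_inv, !Cmod_mult, Cmod_R, Rabs_pos_eq by (try lra; repeat apply Cmult_neq_0; auto).
      apply Rmult_le_reg_r with (lam * (Cmod z * Cmod z)). apply Rmult_lt_0_compat; [lra|nra].
      field_simplify; [|lra]. replace (Cmod z ^ 2) with (Cmod z * Cmod z) by ring. exact H.
  - intros z Hz. unfold phi. destruct (Ceq_dec z 0) as [Ez|Ez].
    + subst z. rewrite H0. ring.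
    + field. auto.
Qed.


Lemma cderiv_plus (p q : C -> C) z lp lq : has_cderiv p z lp -> has_cderiv q z lq ->
  has_cderiv (fun w => p w + q w)%C z (lp + lq)%C.
Proof. intros Hp Hq. exact (@is_derive_plus C_AbsRing C_NormedModule p q z _ _ Hp Hq). Qed.

Lemma part2 (lam : R) : 0 < lam ->
  forall c : R, 2 * lam < c ->
     exists f f1 f2 : C -> C,
       (forall z, unit_disk z -> has_cderiv f z (f1 z)) /\
       (forall z, unit_disk z -> has_cderiv f1 z (f2 z)) /\
       f (RtoC 0) = RtoC 0 /\ f1 (RtoC 0) = RtoC 1 /\
       (forall z, unit_disk z -> Cmod (f2 z) <= c) /\
       ~ Omega lam f.
Proof.
  intros Hlam c Hc.
  set (f := fun z => (z + RtoC (c / 2) * (z * z))%C).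
  set (f1 := fun z => (RtoC 1 + RtoC c * z)%C).
  assert (Hf : forall z, has_cderiv f z (f1 z)).
  { intros z. unfold f, f1. eapply cderiv_val; [|apply cderiv_plus; [apply cderiv_id|]].
    2: { apply cderiv_mult. apply cderiv_const. apply cderiv_mult; apply cderiv_id. }
    replace (RtoC c) with (RtoC (c/2) + RtoC (c/2))%C by (rewrite <- RtoC_plus; f_equal; field).
    ring. }
  exists f, f1, (fun _ => RtoC c). split; [|split; [|split; [|split; [|split]]]].
  - intros z _. apply Hf.
  - intros z _. unfold f1. eapply cderiv_val; [|apply cderiv_plus; [apply cderiv_const|]].
    2: { apply cderiv_mult. apply cderiv_const. apply cderiv_id. }
    cbv beta. ring.
  - unfold f. ring.
  - unfold f1. ring.
  - intros z _. rewrite Cmod_R. rewrite Rabs_pos_eq; lra.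
  - intros [g1 [Hg1 [_ [_ [phi [_ [Hphi Heq]]]]]]].
    set (z0 := RtoC (/2)).
    assert (Hz0 : unit_disk z0) by (unfold unit_disk, z0; rewrite Cmod_R, Rabs_pos_eq; lra).
    assert (E1 : g1 z0 = f1 z0) by (apply (cderiv_unique f z0); auto).
    specialize (Heq z0 Hz0). rewrite E1 in Heq.
    assert (E2 : phi z0 = RtoC (c / (2 * lam))).
    { unfold f, f1, z0 in Heq. unfold z0.
      assert (Hl : RtoC lam <> 0%C) by (apply RtoC_neq; lra).
      assert (H2 : RtoC 2 <> 0%C) by (apply RtoC_neq; lra).
      replace (phi (RtoC (/2))) with ((RtoC lam * (RtoC (/2) * RtoC (/2)) * phi (RtoC (/2))) * / (RtoC lam * (RtoC (/2) * RtoC (/2))))%C.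
      2: { rewrite (RtoC_inv 2) by lra. field. auto. }
      rewrite <- Heq. rewrite (RtoC_inv 2), (RtoC_div c 2), (RtoC_div c (2 * lam)), RtoC_mult by lra.
      field. auto. }
    specialize (Hphi z0 Hz0). rewrite E2, Cmod_R, Rabs_pos_eq in Hphi.
    + apply Rmult_le_compat_r with (r := 2 * lam) in Hphi; [|lra].
      replace (c / (2 * lam) * (2 * lam)) with c in Hphi by (field; lra). lra.
    + apply Rlt_le, Rdiv_lt_0_compat; lra.
Qed.


Theorem theorem4p3 :
  forall lam : R, 0 < lam ->
  (* sufficiency: |f''| <= 2 lam on D implies f in Omega_lam *)
  (forall f f1 f2 : C -> C,
     (forall z, unit_disk z -> has_cderiv f z (f1 z)) ->
     (forall z, unit_disk z -> has_cderiv f1 z (f2 z)) ->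
     f (RtoC 0) = RtoC 0 -> f1 (RtoC 0) = RtoC 1 ->
     (forall z, unit_disk z -> Cmod (f2 z) <= 2 * lam) ->
     Omega lam f)
  /\
  (* sharpness: 2 lam cannot be replaced by any larger constant *)
  (forall c : R, 2 * lam < c ->
     exists f f1 f2 : C -> C,
       (forall z, unit_disk z -> has_cderiv f z (f1 z)) /\
       (forall z, unit_disk z -> has_cderiv f1 z (f2 z)) /\
       f (RtoC 0) = RtoC 0 /\ f1 (RtoC 0) = RtoC 1 /\
       (forall z, unit_disk z -> Cmod (f2 z) <= c) /\
       ~ Omega lam f).
Proof.
  intros lam Hlam. split.
  - exact (part1 lam Hlam).
  - exact (part2 lam Hlam).
Qed.
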